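(* Let $T$ be a table over schema $U$ with $|T|=n$ and $|U|=m$, let $k,l$ be dimensions with $l\le m$, and let $\mathcal{R}$ be a set of association rules over $T$. Consider the following algorithm. For every subset $U'\subseteq U$ with $|U'|=l$, let $T'$ be the projection of $T$ onto $U'$, and run greedy row selection on $T'$: starting from the empty sub-table, repeat $k$ times: among all tuples of $T'$ not yet selected, add to the current sub-table one whose addition yields the largest cell coverage $\mathrm{cellCov}_{\mathcal{R}}(T,\cdot)$. Among the resulting sub-tables (one per choice of $U'$), output one with the maximal cell coverage. Then the output is a $k\times l$ sub-table $T_{sub}$ of $T$ satisfying $\mathrm{cellCov}_{\mathcal{R}}(T,T_{sub})\geq(1-\frac{1}{e})\,\mathrm{OPT}$, where $\mathrm{OPT}$ is the maximum of $\mathrm{cellCov}_{\mathcal{R}}(T,S)$ over all $k\times l$ sub-tables $S$ of $T$ (the optimal value of the Max-Cell-Cover problem).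
   Context: A schema $U=\{u_1,\dots,u_{|U|}\}$ is a finite set of columns; each column $u_i$ has a domain $\mathcal{D}_i$ of allowed values. A table $T$ over $U$ is a finite set of tuples $t$, each assigning a value $t(u_i)\in\mathcal{D}_i$ to every column $u_i$; the pair $\langle t,u\rangle$ is a cell. A sub-table $T_{sub}$ of $T$ is a table over some schema $U_{sub}\subseteq U$ such that each tuple of $T_{sub}$ is the projection of some tuple of $T$ onto $U_{sub}$; it is of size $k\times l$ if it has $k$ tuples and $|U_{sub}|=l$. An association rule $R$ has the form $\{(u_1,v_1),\dots,(u_{r},v_{r})\}\rightarrow\{(u_{r+1},v_{r+1}),\dots,(u_{r+p},v_{r+p})\}$ with $u_i\in U$ and $v_i\in\mathcal{D}_i$; $U_R=\{u_1,\dots,u_{r+p}\}$ is its set of columns. $R$ holds for a tuple $t$ if $t(u_i)=v_i$ for all $1\le i\le r+p$; $T_R$ is the set of tuples of $T$ for which $R$ holds. A rule $R\in\mathcal{R}$ is covered by $T_{sub}$ if $U_R\subseteq U_{sub}$ and $R$ holds for some tuple of $T_{sub}$; let $\mathcal{R}_{sub}$ be the set of covered rules. Let $\mathrm{cell}(R,T)=\{\langle t,u\rangle : t\in T_R,\ u\in U_R\}$. The cell coverage is $\mathrm{cellCov}_{\mathcal{R}}(T,T_{sub})=\frac{1}{\mathrm{upcov}}\left|\bigcup_{R\in\mathcal{R}_{sub}}\mathrm{cell}(R,T)\right|$, where $\mathrm{upcov}=\left|\bigcup_{R\in\mathcal{R}}\mathrm{cell}(R,T)\right|$. Max-Cell-Cover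 is the problem of finding a $k\times l$ sub-table of $T$ with maximal cell coverage. *)

(* Defs.v *)
From HB Require Import structures.
From mathcomp Require Import all_boot all_order all_algebra.
From mathcomp Require Import reals sequences exp.
Set Implicit Arguments. Unset Strict Implicit. Unset Printing Implicit Defensive.
Import Order.TTheory GRing.Theory Num.Theory.
Local Open Scope ring_scope.

(* Columns form a finite type [col] (the schema U, m = #|col|); values live in
   an eqType [V].  A table T with n tuples is given by an injective map
   tab : 'I_n -> {ffun col -> V} (injectivity = T is a set of n tuples).
   A cell <t,u> of T is identified with a pair (i, u) : 'I_n * col. *)

Record rule (col : finType) (V : eqType) := Rule {
  lhs : seq (col * V);
  rhs : seq (col * V) }.

Definition rule_pairs (col : finType) (V : eqType) (r : rule col V) :=
  lhs r ++ rhs r.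

Definition UR (col : finType) (V : eqType) (r : rule col V) : {set col} :=
  [set u | u \in [seq uv.1 | uv <- rule_pairs r]].

Definition holds (col : finType) (V : eqType) (r : rule col V)
  (t : {ffun col -> V}) : bool :=
  all (fun uv => t uv.1 == uv.2) (rule_pairs r).

(* A tuple over a sub-schema U_sub is a finite function col -> option V which
   is defined (Some) exactly on U_sub.  Projection of t onto Us: *)
Definition proj (col : finType) (V : eqType) (Us : {set col})
  (t : {ffun col -> V}) : {ffun col -> option V} :=
  [ffun u => if u \in Us then Some (t u) else None].

Definition holds_sub (col : finType) (V : eqType) (r : rule col V)
  (p : {ffun col -> option V}) : bool :=
  all (fun uv => p uv.1 == Some uv.2) (rule_pairs r).

Definition cell (col : finType) (V : eqType) (n : nat)
  (tab : 'I_n -> {ffun col -> V}) (r : rule col V) : {set 'I_n * col} :=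
  [set iu | holds r (tab iu.1) && (iu.2 \in UR r)].

Definition covered (col : finType) (V : eqType) (r : rule col V)
  (Us : {set col}) (rows : seq {ffun col -> option V}) : bool :=
  (UR r \subset Us) && has (holds_sub r) rows.

Definition cellCov (R : realType) (col : finType) (V : eqType) (n : nat)
  (tab : 'I_n -> {ffun col -> V}) (rs : seq (rule col V))
  (Us : {set col}) (rows : seq {ffun col -> option V}) : R :=
  (#|\bigcup_(r <- rs | covered r Us rows) cell tab r|)%:R /
  (#|\bigcup_(r <- rs) cell tab r|)%:R.

(* (Us, rows) is a k x l sub-table of T: schema Us with |Us| = l, and rows a
   duplicate-free list (i.e. a set) of k tuples, each the projection onto Us
   of some tuple of T. *)
Definition is_subtable (col : finType) (V : eqType) (n : nat)
  (tab : 'I_n -> {ffun col -> V}) (k l : nat)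
  (Us : {set col}) (rows : seq {ffun col -> option V}) : Prop :=
  [/\ #|Us| = l, uniq rows, size rows = k &
      forall p, p \in rows -> exists i : 'I_n, p = proj Us (tab i)].

Definition projT (col : finType) (V : eqType) (n : nat)
  (tab : 'I_n -> {ffun col -> V}) (Us : {set col}) :=
  [seq proj Us (tab i) | i <- enum 'I_n].

Definition greedy_step (R : realType) (col : finType) (V : eqType) (n : nat)
  (tab : 'I_n -> {ffun col -> V}) (rs : seq (rule col V)) (Us : {set col})
  (S : seq {ffun col -> option V}) (p : {ffun col -> option V}) : Prop :=
  [/\ p \in projT tab Us, p \notin S &
      forall q, q \in projT tab Us -> q \notin S ->
        cellCov R tab rs Us (rcons S q) <= cellCov R tab rs Us (rcons S p)].

(* rows is a possible result (ties broken arbitrarily) of k rounds of greedy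
   row selection on T' = projection of T onto Us, starting from empty *)
Definition greedy_run (R : realType) (col : finType) (V : eqType) (n : nat)
  (tab : 'I_n -> {ffun col -> V}) (rs : seq (rule col V)) (k : nat)
  (Us : {set col}) (rows : seq {ffun col -> option V}) : Prop :=
  size rows = k /\
  forall i, (i < k)%N ->
    greedy_step R tab rs Us (take i rows) (nth [ffun => None] rows i).

(* the column sets U' considered by the algorithm: |U'| = l and the greedy
   selection can perform k rounds (T' has at least k distinct tuples) *)
Definition feasible_cols (col : finType) (V : eqType) (n : nat)
  (tab : 'I_n -> {ffun col -> V}) (k l : nat) (Us : {set col}) : bool :=
  (#|Us| == l) && (k <= size (undup (projT tab Us)))%N.

(* Main.v *)
Require Import Defs.
From HB Require Import structures.
From mathcomp Require Import all_boot all_order all_algebra.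
From mathcomp Require Import reals sequences exp.
From mathcomp Require Import zify lra.
Import Order.TTheory GRing.Theory Num.Theory.
Local Open Scope ring_scope.

Lemma in_bigcup_seq (I : Type) (X : finType) (s : seq I) (P : pred I)
  (F : I -> {set X}) x :
  (x \in \bigcup_(i <- s | P i) F i) = has (fun i => P i && (x \in F i)) s.
Proof.
elim: s => [|a s IH]; first by rewrite big_nil in_set0.
by rewrite big_cons /=; case: (P a); rewrite ?inE IH.
Qed.

Lemma subm_card (T : Type) (X : finType) (A : T -> {set X}) (Bs : {set X})
  (O : seq T) :
  (#|Bs :|: \bigcup_(o <- O) A o| + size O * #|Bs|
     <= #|Bs| + \sum_(o <- O) #|Bs :|: A o|)%N.
Proof.
elim: O => [|o O IH]; first by rewrite big_nil setU0 /=; lia.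
rewrite !big_cons /=.
set X1 := Bs :|: \bigcup_(j <- O) A j.
set Y := Bs :|: A o.
have eU : Bs :|: (A o :|: \bigcup_(j <- O) A j) = X1 :|: Y.
  by apply/setP => x; rewrite /X1 /Y !inE; do ! case: (_ \in _).
have hI : (#|Bs| <= #|X1 :&: Y|)%N.
  by apply: subset_leq_card; rewrite subsetI !subsetUl.
have := cardsUI X1 Y.
rewrite eU=> h; move: IH; rewrite -/X1; move: hI h; clearbody X1 Y; lia.
Qed.

Lemma uniq_greedy (T : eqType) (x0 : T) (s : seq T) :
  (forall i, (i < size s)%N -> nth x0 s i \notin take i s) -> uniq s.
Proof.
move=> H; apply/(uniqP x0) => i j; rewrite !inE => hi hj e.
have key : forall a b, (a < b)%N -> (b < size s)%N -> nth x0 s a = nth x0 s b -> False.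
  move=> a b hab hb eab; move: (H b hb); rewrite -eab.
  have ha : (a < size (take b s))%N by rewrite size_take hb.
  by rewrite -(nth_take x0 hab) mem_nth.
case: (ltngtP i j) => // hij; first by case: (key _ _ hij hj e).
by case: (key _ _ hij hi (esym e)).
Qed.

Lemma pow_le_expR (R : realType) (k : nat) : (0 < k)%N ->
  (1 - (k%:R : R)^-1) ^+ k <= (expR 1)^-1.
Proof.
move=> hk.
have a0 : (0 : R) < k%:R by rewrite ltr0n.
have q0 : 0 <= 1 - (k%:R : R)^-1.
  by rewrite subr_ge0 invr_le1 // ?ler1n // unitfE gt_eqF.
apply: (@le_trans _ _ (expR (- (k%:R : R)^-1) ^+ k)).
  apply: lerXn2r; rewrite ?nnegrE //; first exact: expR_ge0.
  by have := expR_ge1Dx (- (k%:R : R)^-1).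
by rewrite -expRM_natr mulNr mulVf ?gt_eqF // expRN.
Qed.
Definition Acov (col : finType) (V : eqType) (n : nat)
  (tab : 'I_n -> {ffun col -> V}) (rs : seq (rule col V)) (Us : {set col})
  (p : {ffun col -> option V}) : {set 'I_n * col} :=
  \bigcup_(r <- rs | (UR r \subset Us) && holds_sub r p) cell tab r.
Arguments Acov {col V n}.

Lemma cov_eq (col : finType) (V : eqType) (n : nat)
  (tab : 'I_n -> {ffun col -> V}) (rs : seq (rule col V)) (Us : {set col}) S :
  \bigcup_(r <- rs | covered r Us S) cell tab r = \bigcup_(p <- S) Acov tab rs Us p.
Proof.
apply/setP => x; rewrite in_bigcup_seq (@in_bigcup_seq _ _ _ xpredT).
rewrite /Acov (eq_has (a2 := fun p => has (fun r0 => ((UR r0 \subset Us) && holds_sub r0 p) && (x \in cell tab r0)) rs)); last by move=> p /=; rewrite in_bigcup_seq.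
elim: rs => [|r rs IH] /=; first by rewrite (eq_has (a2 := pred0)) ?has_pred0.
rewrite IH /covered [RHS](eq_has (a2 := predU (fun p => ((UR r \subset Us) && holds_sub r p) && (x \in cell tab r))
   (fun p => has (fun r0 => ((UR r0 \subset Us) && holds_sub r0 p) && (x \in cell tab r0)) rs))) //.
rewrite has_predU; congr (_ || _).
case: (UR r \subset Us); case: (x \in cell tab r); rewrite /= ?andbT ?andbF.
- by apply: eq_has => p /=; rewrite andbT.
- by symmetry; apply/negbTE/hasPn => p _ /=; rewrite andbF.
- by symmetry; apply/negbTE/hasPn => p _ /=.
- by symmetry; apply/negbTE/hasPn => p _ /=.
Qed.

Lemma cellCovE (R : realType) (col : finType) (V : eqType) (n : nat)
  (tab : 'I_n -> {ffun col -> V}) (rs : seq (rule col V)) (Us : {set col}) S :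
  cellCov R tab rs Us S =
  (#|\bigcup_(p <- S) Acov tab rs Us p|)%:R * (#|\bigcup_(r <- rs) cell tab r|%:R)^-1.
Proof. by rewrite /cellCov cov_eq. Qed.

Lemma cellCov_ge0 (R : realType) (col : finType) (V : eqType) (n : nat)
  (tab : 'I_n -> {ffun col -> V}) (rs : seq (rule col V)) (Us : {set col}) S :
  0 <= cellCov R tab rs Us S.
Proof. by rewrite /cellCov divr_ge0. Qed.

Lemma sumr_seq_const (R : realType) (T : Type) (O : seq T) (x : R) :
  \sum_(o <- O) x = x *+ size O.
Proof. by elim: O => [|a O IH]; rewrite ?big_nil ?big_cons ?IH ?mulrS. Qed.

Lemma greedy_bound (R : realType) (col : finType) (V : eqType) (n : nat)
  (tab : 'I_n -> {ffun col -> V}) (rs : seq (rule col V)) (Us : {set col})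
  (k : nat) run O :
  (0 < k)%N -> size O = k -> {subset O <= projT tab Us} ->
  greedy_run R tab rs k Us run ->
  (1 - (expR 1)^-1) * cellCov R tab rs Us O <= cellCov R tab rs Us run.
Proof.
move=> k0 sO Osub [srun hrun].
set f := cellCov R tab rs Us.
set c := (#|\bigcup_(r <- rs) cell tab r|%:R : R)^-1.
have c0 : 0 <= c by rewrite /c invr_ge0.
set A := Acov tab rs Us.
have fE : forall S, f S = (#|\bigcup_(p <- S) A p|)%:R * c by move=> S; exact: cellCovE.
have fR : forall S o, f (rcons S o) = (#|(\bigcup_(p <- S) A p) :|: A o|)%:R * c.
  by move=> S o; rewrite fE -cats1 big_cat big_seq1.
have step : forall (S : seq {ffun col -> option V}) (p : {ffun col -> option V}), p \notin S ->
   (forall q, q \in projT tab Us -> q \notin S -> f (rcons S q) <= f (rcons S p)) ->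
   f O + k%:R * f S <= f S + k%:R * f (rcons S p).
  move=> S p pS hg.
  have hn := @subm_card _ _ A (\bigcup_(p <- S) A p) O.
  have hm : (#|\bigcup_(p <- O) A p| <= #|(\bigcup_(p <- S) A p) :|: \bigcup_(p <- O) A p|)%N.
    by apply: subset_leq_card; rewrite subsetUr.
  have h1 : f O + k%:R * f S <= f S + \sum_(o <- O) f (rcons S o).
    under eq_bigr do rewrite fR. rewrite !fE.
    rewrite -mulr_suml mulrA -mulrDl -mulrDl -natrM -natr_sum -!natrD.
    apply: ler_wpM2r => //; rewrite ler_nat -sO; exact: leq_trans (leq_add hm (leqnn _)) hn.
  apply: (le_trans h1); rewrite lerD2l.
  have -> : k%:R * f (rcons S p) = \sum_(o <- O) f (rcons S p).
    by rewrite sumr_seq_const sO mulr_natl.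
  rewrite [X in X <= _]big_seq [X in _ <= X]big_seq; apply: ler_sum => o oO.
  case: (boolP (o \in S)) => oS; last first.
    by apply: hg oS; exact: Osub.
  have -> : f (rcons S o) = f S.
    rewrite fR fE; have /setUidPl -> // : A o \subset \bigcup_(p <- S) A p.
    apply/subsetP => x hx; rewrite (@in_bigcup_seq _ _ _ xpredT); apply/seq.hasP; by exists o.
  rewrite fR fE ler_wpM2r // ler_nat; apply: subset_leq_card; exact: subsetUl.
set q := 1 - (k%:R : R)^-1.
have a0 : (0 : R) < k%:R by rewrite ltr0n.
have q0 : 0 <= q.
  by rewrite subr_ge0 invr_le1 // ?ler1n // unitfE gt_eqF.
have aq : k%:R * q = k%:R - 1 by rewrite /q mulrBr mulr1 mulfV ?gt_eqF.
have fO0 : 0 <= f O by exact: cellCov_ge0.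
have rec : forall i, (i <= k)%N -> f O - f (take i run) <= q ^+ i * f O.
  elim => [|i IH] hi.
    by rewrite take0 (fE [::]) big_nil cards0 mul0r subr0 expr0 mul1r.
  have hik : (i < k)%N by [].
  have [pP pS hg] := hrun i hik.
  rewrite (take_nth [ffun => None]) ?srun //.
  have h := step _ _ pS hg.
  have IH' := IH (ltnW hik).
  apply: (@le_trans _ _ (q * (f O - f (take i run)))); last first.
    by rewrite exprS -mulrA ler_wpM2l.
  rewrite -(ler_pM2l a0) mulrA aq.
  move: h; set x := f O; set y := f (take i run); set z := f (rcons _ _); set a := (k%:R : R).
  move=> h; nra.
have := rec k (leqnn k); rewrite take_oversize ?srun // => h.
have hp := @pow_le_expR R k k0.
have h2 : q ^+ k * f O <= (expR 1)^-1 * f O by rewrite ler_wpM2r.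
move: h h2; set e := (expR 1)^-1; set x := f O; set y := f run => h h2.
nra.
Qed.

Theorem proposition4p3 (R : realType) (col : finType) (V : eqType) (n : nat)
  (tab : 'I_n -> {ffun col -> V}) (tab_inj : injective tab)
  (rs : seq (rule col V)) (k l : nat) (hl : (l <= #|col|)%N)
  (run : {set col} -> seq {ffun col -> option V})
  (hrun : forall Us, feasible_cols tab k l Us -> greedy_run R tab rs k Us (run Us))
  (Uo : {set col}) (hUo : feasible_cols tab k l Uo)
  (hmax : forall Us, feasible_cols tab k l Us ->
            cellCov R tab rs Us (run Us) <= cellCov R tab rs Uo (run Uo)) :
  is_subtable tab k l Uo (run Uo) /\
  forall (Us : {set col}) (rows : seq {ffun col -> option V}),
    is_subtable tab k l Us rows ->
    (1 - (expR 1)^-1) * cellCov R tab rs Us rows <= cellCov R tab rs Uo (run Uo).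
Proof.
split.
  have [srun hr] := hrun _ hUo.
  have hUo' := hUo; move/andP: hUo' => [/eqP hl' _].
  split => //.
  - apply: (@uniq_greedy _ [ffun => None]) => i; rewrite srun => hi; by case: (hr i hi).
  - move=> p pin.
    have hi : (index p (run Uo) < k)%N by rewrite -srun index_mem.
    have [pP _ _] := hr _ hi.
    rewrite nth_index in pP => //.
    move/mapP: pP => [j _ ->]; by exists j.
move=> Us rows [hUs urows srows hrows].
have feas : feasible_cols tab k l Us.
  rewrite /feasible_cols hUs eqxx /= -srows; apply: uniq_leq_size => // p /hrows [i ->].
  rewrite mem_undup; apply: map_f; exact: mem_enum.
apply: le_trans (hmax _ feas).
case: (posnP k) => [k0|kpos].
  move: srows; rewrite k0 => /size0nil ->.
  rewrite cellCovE big_nil cards0 mul0r mulr0; exact: cellCov_ge0.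
have gb := @greedy_bound R col V n tab rs Us k (run Us) rows kpos srows.
apply: gb (hrun _ feas).
move=> p /hrows [i ->]; apply: map_f; exact: mem_enum.
Qed.
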